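(* There exists a timelike vector field $X$ on $\mathbb{X}_{-1}$ such that (1) $X$ extends to a timelike vector field on $\overline{\mathbb{X}}_{-1}$, and (2) the Riemannian metric $g_X$ obtained from the anti de Sitter metric $g$ by Wick rotation along $X$, namely $g_X(v,w)=g(v,w)-2\,\dfrac{g(v,X)g(w,X)}{g(X,X)}$, is complete.
   Context: Anti de Sitter space $\mathbb{X}_{-1}=PSL(2,\mathbb{R})$ with the Lorentzian metric $g$ of curvature $-1$ induced by $\eta(A,A)=-\det A$ on $SL(2,\mathbb{R})$. Klein model: $\mathbb{X}_{-1}=\{[A]:\det A>0\}\subset\mathbb{P}^3=\mathbb{P}(M(2,\mathbb{R}))$, with closure $\overline{\mathbb{X}}_{-1}$ and boundary $\partial\mathbb{X}_{-1}=\{\det=0\}$, which carries a conformal Lorentzian structure (so timelikeness of vectors makes sense on $\overline{\mathbb{X}}_{-1}$). *)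

(* Defs.v *)
From Stdlib Require Import Reals.
From Coquelicot Require Import Coquelicot.
Open Scope R_scope.

(** 2x2 real matrices, identified with R^4 = (R*R)*(R*R);
    A = ((a, b), (c, d)) stands for the matrix [[a, b], [c, d]]. *)
Definition M2 : Type := ((R * R) * (R * R))%type.

Definition ma (A : M2) : R := fst (fst A).
Definition mb (A : M2) : R := snd (fst A).
Definition mc (A : M2) : R := fst (snd A).
Definition md (A : M2) : R := snd (snd A).

Definition det (A : M2) : R := ma A * md A - mb A * mc A.

(** The bilinear form eta, polarization of eta(A,A) = - det A. *)
Definition eta (A B : M2) : R :=
  - (/ 2) * (ma A * md B + md A * ma B - mb A * mc B - mc A * mb B).

Definition mzero : M2 := ((0, 0), (0, 0)).

Definition std_basis (E : M2) : Prop :=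
  E = ((1, 0), (0, 0)) \/ E = ((0, 1), (0, 0)) \/
  E = ((0, 0), (1, 0)) \/ E = ((0, 0), (0, 1)).

Fixpoint Ck (n : nat) (U : M2 -> Prop) (f : M2 -> R) : Prop :=
  match n with
  | O => forall A, U A -> continuous f A
  | S k => (forall A, U A -> continuous f A) /\
           forall E, std_basis E ->
             exists g : M2 -> R,
               (forall A, U A -> is_derive (fun s : R => f (plus A (scal s E))) 0 (g A))
               /\ Ck k U g
  end.

Definition smooth_on (U : M2 -> Prop) (f : M2 -> R) : Prop := forall n, Ck n U f.

Definition smooth_map_on (U : M2 -> Prop) (F : M2 -> M2) : Prop :=
  smooth_on U (fun A => ma (F A)) /\ smooth_on U (fun A => mb (F A)) /\
  smooth_on U (fun A => mc (F A)) /\ smooth_on U (fun A => md (F A)).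

(** Points of the Klein model: [A] with A <> 0; [A] = [B] iff B = lam A. *)
Definition proj_eq (A B : M2) : Prop := exists lam : R, lam <> 0 /\ B = scal lam A.

(** Representatives of points of the closure of X_{-1} in P^3. *)
Definition closure_cone (A : M2) : Prop := A <> mzero /\ 0 <= det A.

(** A vector field on an open part of P^3 is encoded by a map F : R^4 -> R^4,
    the tangent vector at [A] being the class of F(A) in T_[A]P^3 = R^4 / R A
    (rescaled with A): we require F(lam A) = lam F(A) mod A. *)
Definition proj_equivariant (F : M2 -> M2) : Prop :=
  forall A lam, closure_cone A -> lam <> 0 ->
    exists mu : R, F (scal lam A) = plus (scal lam (F A)) (scal mu A).

(** The anti de Sitter metric g of curvature -1 at the point [A] (det A > 0),
    on tangent vectors represented by v, w in R^4 (mod A).  It is the pull back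
    of eta|_{SL(2,R)} via A |-> A / sqrt(det A). *)
Definition gAdS (A v w : M2) : R :=
  (det A * eta v w + eta A v * eta A w) / (det A ^ 2).

Definition gWick (F : M2 -> M2) (A v w : M2) : R :=
  gAdS A v w - 2 * gAdS A v (F A) * gAdS A w (F A) / gAdS A (F A) (F A).

(** Smooth vector field on the closure of X_{-1}, timelike everywhere:
    timelike for g in the interior; at boundary points (det A = 0) tangent to
    the boundary (eta(A, F A) = 0) and timelike for the conformal Lorentzian
    structure of the boundary (induced by eta on A^perp / R A). *)
Definition timelike_field_on_closure (F : M2 -> M2) : Prop :=
  (exists U : M2 -> Prop, open U /\ (forall A, closure_cone A -> U A)
                          /\ smooth_map_on U F)
  /\ proj_equivariant F
  /\ (forall A, 0 < det A -> gAdS A (F A) (F A) < 0)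
  /\ (forall A, A <> mzero -> det A = 0 ->
        eta A (F A) = 0 /\ eta (F A) (F A) < 0).

(** C^1 curves in X_{-1} (lifted to matrices of positive determinant),
    parametrized by [0,1], with derivative dc. *)
Definition admissible_curve (c dc : R -> M2) : Prop :=
  (forall t, 0 <= t <= 1 -> 0 < det (c t)) /\
  (forall t, 0 <= t <= 1 -> is_derive c t (dc t)) /\
  (forall t, 0 <= t <= 1 -> continuous dc t).

Definition wick_length (F : M2 -> M2) (c dc : R -> M2) : R :=
  RInt (fun t => sqrt (gWick F (c t) (dc t) (dc t))) 0 1.

Definition wick_dist_lt (F : M2 -> M2) (A B : M2) (eps : R) : Prop :=
  exists c dc : R -> M2, admissible_curve c dc /\
    proj_eq A (c 0) /\ proj_eq B (c 1) /\ wick_length F c dc < eps.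

Definition wick_complete (F : M2 -> M2) : Prop :=
  forall u : nat -> M2, (forall n, 0 < det (u n)) ->
    (forall eps, 0 < eps -> exists N : nat, forall m n, (N <= m)%nat -> (N <= n)%nat ->
        wick_dist_lt F (u m) (u n) eps) ->
    exists B : M2, 0 < det B /\
      forall eps, 0 < eps -> exists N : nat, forall n, (N <= n)%nat ->
        wick_dist_lt F (u n) B eps.

(* Main.v *)
Require Import Defs.
From Stdlib Require Import Reals Lra Psatz FunctionalExtensionality.
From Coquelicot Require Import Coquelicot.
Open Scope R_scope.


Section Cont.
Context {U : UniformSpace}.
Lemma cplus (f g : U -> R) x : continuous f x -> continuous g x -> continuous (fun y => f y + g y) x.
Proof. apply (continuous_plus f g). Qed.
Lemma cminus (f g : U -> R) x : continuous f x -> continuous g x -> continuous (fun y => f y - g y) x.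
Proof. apply (continuous_minus f g). Qed.
Lemma cmult (f g : U -> R) x : continuous f x -> continuous g x -> continuous (fun y => f y * g y) x.
Proof. apply (continuous_mult f g). Qed.
Lemma copp (f : U -> R) x : continuous f x -> continuous (fun y => - f y) x.
Proof. apply (continuous_opp f). Qed.
Lemma cconst (k : R) x : continuous (fun _ : U => k) x.
Proof. apply continuous_const. Qed.
Lemma cinv (f : U -> R) x : continuous f x -> f x <> 0 -> continuous (fun y => / f y) x.
Proof. intros H H0. apply (continuous_comp f (fun z => / z)); auto. apply continuous_Rinv; auto. Qed.
Lemma csqrt (f : U -> R) x : continuous f x -> continuous (fun y => sqrt (f y)) x.
Proof. intros H. apply (continuous_comp f sqrt); auto. apply continuous_sqrt. Qed.
Lemma cln (f : U -> R) x : continuous f x -> 0 < f x -> continuous (fun y => ln (f y)) x.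
Proof. intros H H0. apply (continuous_comp f ln); auto. apply continuous_ln; auto. Qed.
Lemma cabs (f : U -> R) x : continuous f x -> continuous (fun y => Rabs (f y)) x.
Proof. intros H. apply (continuous_comp f Rabs); auto. apply continuous_Rabs. Qed.
Lemma cpow (f : U -> R) x n : continuous f x -> continuous (fun y => (f y) ^ n) x.
Proof. intros H. induction n. apply cconst. simpl. apply cmult; auto. Qed.
Lemma cma (f : U -> M2) x : continuous f x -> continuous (fun y => ma (f y)) x.
Proof. intros H. apply (continuous_comp f ma); auto. destruct (f x) as [[p q] [r s]].
 unfold ma. apply (continuous_comp fst fst). apply continuous_fst. apply continuous_fst. Qed.
Lemma cmb (f : U -> M2) x : continuous f x -> continuous (fun y => mb (f y)) x.
Proof. intros H. apply (continuous_comp f mb); auto. destruct (f x) as [[p q] [r s]].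
 unfold mb. apply (continuous_comp fst snd). apply continuous_fst. apply continuous_snd. Qed.
Lemma cmc (f : U -> M2) x : continuous f x -> continuous (fun y => mc (f y)) x.
Proof. intros H. apply (continuous_comp f mc); auto. destruct (f x) as [[p q] [r s]].
 unfold mc. apply (continuous_comp snd fst). apply continuous_snd. apply continuous_fst. Qed.
Lemma cmd (f : U -> M2) x : continuous f x -> continuous (fun y => md (f y)) x.
Proof. intros H. apply (continuous_comp f md); auto. destruct (f x) as [[p q] [r s]].
 unfold md. apply (continuous_comp snd snd). apply continuous_snd. apply continuous_snd. Qed.
End Cont.

Lemma cid_M2 (x : M2) : continuous (fun y : M2 => y) x.
Proof. apply continuous_id. Qed.

Ltac cont :=
  repeat match goal with
  | |- continuous (fun x => @?A x + @?B x) _ => apply (cplus A B)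
  | |- continuous (fun x => @?A x - @?B x) _ => apply (cminus A B)
  | |- continuous (fun x => @?A x * @?B x) _ => apply (cmult A B)
  | |- continuous (fun x => @?A x / @?B x) _ => apply (cmult A (fun x => / B x))
  | |- continuous (fun x => - @?A x) _ => apply (copp A)
  | |- continuous (fun x => / @?A x) _ => apply (cinv A)
  | |- continuous (fun x => sqrt (@?A x)) _ => apply (csqrt A)
  | |- continuous (fun x => ln (@?A x)) _ => apply (cln A)
  | |- continuous (fun x => Rabs (@?A x)) _ => apply (cabs A)
  | |- continuous (fun x => (@?A x) ^ ?n) _ => apply (cpow A)
  | |- continuous (fun x => ma (@?A x)) _ => apply (cma A)
  | |- continuous (fun x => mb (@?A x)) _ => apply (cmb A)
  | |- continuous (fun x => mc (@?A x)) _ => apply (cmc A)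
  | |- continuous (fun x => md (@?A x)) _ => apply (cmd A)
  | |- continuous (fun x => ?k) _ => apply cconst
  | |- continuous (fun x => x) _ => apply continuous_id
  end.

Definition Fx (A : M2) : M2 := ((mb A - mc A, -(ma A + md A)), (ma A + md A, mb A - mc A)).
Definition r2 (A : M2) : R := (ma A + md A)^2 + (mb A - mc A)^2.

Lemma M2_eq (A B : M2) : ma A = ma B -> mb A = mb B -> mc A = mc B -> md A = md B -> A = B.
Proof. destruct A as [[p q] [r s]], B as [[p' q'] [r' s']]; unfold ma, mb, mc, md; simpl; intros; subst; auto. Qed.

Lemma ma_plus A B : ma (plus A B) = ma A + ma B. Proof. reflexivity. Qed.
Lemma mb_plus A B : mb (plus A B) = mb A + mb B. Proof. reflexivity. Qed.
Lemma mc_plus A B : mc (plus A B) = mc A + mc B. Proof. reflexivity. Qed.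
Lemma md_plus A B : md (plus A B) = md A + md B. Proof. reflexivity. Qed.
Lemma ma_scal l A : ma (scal l A) = l * ma A. Proof. reflexivity. Qed.
Lemma mb_scal l A : mb (scal l A) = l * mb A. Proof. reflexivity. Qed.
Lemma mc_scal l A : mc (scal l A) = l * mc A. Proof. reflexivity. Qed.
Lemma md_scal l A : md (scal l A) = l * md A. Proof. reflexivity. Qed.

Lemma scalR (l x : R) : scal l x = l * x. Proof. reflexivity. Qed.

Lemma r2_det A : 4 * det A <= r2 A.
Proof. unfold r2, det. pose proof (pow2_ge_0 (ma A - md A)); pose proof (pow2_ge_0 (mb A + mc A)). nra. Qed.

Lemma eta_A_F A : eta A (Fx A) = 0.
Proof. unfold eta, Fx, ma, mb, mc, md; simpl. ring. Qed.
Lemma eta_F_F A : eta (Fx A) (Fx A) = - r2 A.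
Proof. unfold eta, Fx, r2, ma, mb, mc, md; simpl. field. Qed.

Lemma gWick_simpl A v : 0 < det A ->
  gWick Fx A v v = eta v v / det A + (eta A v)^2 / (det A)^2 + 2 * (eta v (Fx A))^2 / (r2 A * det A).
Proof.
  intros H. assert (Hr : 0 < r2 A) by (pose proof (r2_det A); lra).
  unfold gWick, gAdS. rewrite eta_A_F, eta_F_F.
  field. lra.
Qed.

Definition lin (al be ga de : R) (A : M2) : R := al * ma A + be * mb A + ga * mc A + de * md A.

Lemma Ck_const n U k : Ck n U (fun _ => k).
Proof.
  revert k; induction n; intros k; simpl.
  - intros; apply continuous_const.
  - split. intros; apply continuous_const.
    intros E _. exists (fun _ => 0). split; auto.
    intros A _. apply (is_derive_const k 0).
Qed.

Lemma Ck_lin n U al be ga de : Ck n U (lin al be ga de).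
Proof.
  destruct n; simpl.
  - intros A _. unfold lin. cont; apply continuous_id.
  - split. intros A _. unfold lin. cont; apply continuous_id.
    intros E _. exists (fun _ => lin al be ga de E). split; [|apply Ck_const].
    intros A _.
    apply (is_derive_ext (fun s => lin al be ga de A + s * lin al be ga de E)).
    + intros s. change R in s. match goal with |- ?x = ?y => change (@eq R x y) end. unfold lin. rewrite ma_plus, mb_plus, mc_plus, md_plus, ma_scal, mb_scal, mc_scal, md_scal. ring.
    + auto_derive; [exact I | ring].
Qed.

Lemma smooth_lin U al be ga de f : (forall A, f A = lin al be ga de A) -> smooth_on U f.
Proof.
  intros H n. assert (f = lin al be ga de) by (apply functional_extensionality; auto).
  subst. apply Ck_lin.
Qed.

Lemma Fx_timelike : timelike_field_on_closure Fx.
Proof.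
  split; [|split; [|split]].
  - exists (fun _ => True). split; [|split].
    + apply open_true.
    + auto.
    + unfold smooth_map_on, Fx, ma, mb, mc, md; simpl.
      split; [|split; [|split]].
      * apply (smooth_lin _ 0 1 (-1) 0). intros A; unfold lin, ma, mb, mc, md; ring.
      * apply (smooth_lin _ (-1) 0 0 (-1)). intros A; unfold lin, ma, mb, mc, md; ring.
      * apply (smooth_lin _ 1 0 0 1). intros A; unfold lin, ma, mb, mc, md; ring.
      * apply (smooth_lin _ 0 1 (-1) 0). intros A; unfold lin, ma, mb, mc, md; ring.
  - intros A lam _ _. exists 0. apply M2_eq;
      unfold Fx; rewrite ?ma_plus, ?mb_plus, ?mc_plus, ?md_plus, ?ma_scal, ?mb_scal, ?mc_scal, ?md_scal;
      unfold ma, mb, mc, md; simpl; rewrite ?ma_scal, ?mb_scal, ?mc_scal, ?md_scal; ring.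
  - intros A H. assert (Hr : 0 < r2 A) by (pose proof (r2_det A); lra).
    unfold gAdS. rewrite eta_A_F, eta_F_F.
    replace ((det A * - r2 A + 0 * 0) / det A ^ 2) with (- (r2 A / det A)) by (field; lra).
    assert (0 < r2 A / det A) by (apply Rdiv_lt_0_compat; lra). lra.
  - intros A HA Hd. split. apply eta_A_F. rewrite eta_F_F.
    assert (r2 A <> 0 \/ r2 A = 0) as [h|h] by lra.
    + assert (0 <= r2 A) by (unfold r2; pose proof (pow2_ge_0 (ma A + md A)); pose proof (pow2_ge_0 (mb A - mc A)); lra). lra.
    + exfalso. apply HA. unfold r2, det in *.
      pose proof (pow2_ge_0 (ma A + md A)); pose proof (pow2_ge_0 (mb A - mc A)).
      assert (E1 : ma A + md A = 0) by (apply Rsqr_0_uniq; unfold Rsqr; simpl in *; lra).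
      assert (E2 : mb A - mc A = 0) by (apply Rsqr_0_uniq; unfold Rsqr; simpl in *; lra).
      assert (md A = - ma A) by lra. assert (mc A = mb A) by lra.
      assert (ma A * ma A + mb A * mb A = 0) by nra.
      assert (ma A = 0 /\ mb A = 0) as [h1 h2] by nra.
      destruct A as [[p q] [r s]]; unfold mzero, ma, mb, mc, md in *; simpl in *.
      f_equal; f_equal; lra.
Qed.


Definition Pd (A v : M2) : R := (ma A + md A)*(ma v + md v) + (mb A - mc A)*(mb v - mc v).
Definition dot (A v : M2) : R := ma A * ma v + mb A * mb v + mc A * mc v + md A * md v.
Definition Sq (A v : M2) : R :=
  dot v v / r2 A - 2 * Pd A v * dot A v / (r2 A)^2 + (Pd A v)^2 * dot A A / (r2 A)^3.
Definition Ddet (A v : M2) : R := ma A * md v + md A * ma v - mb A * mc v - mc A * mb v.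

Definition s0r (a b c d e f g h : R) : R :=
  let x1 := (a+d)/2 in let x2 := (b-c)/2 in let y1 := (a-d)/2 in let y2 := (b+c)/2 in
  let k1 := (e+h)/2 in let k2 := (f-g)/2 in let z1 := (e-h)/2 in let z2 := (f+g)/2 in
  let rho2 := x1^2 + x2^2 in let yy := y1^2 + y2^2 in
  let p := x1*k1 + x2*k2 in
  y1*z1 + y2*z2 - p*yy/rho2.

Definition Er (a b c d e f g h : R) : R :=
  let x1 := (a+d)/2 in let x2 := (b-c)/2 in let y1 := (a-d)/2 in let y2 := (b+c)/2 in
  let k1 := (e+h)/2 in let k2 := (f-g)/2 in let z1 := (e-h)/2 in let z2 := (f+g)/2 in
  let rho2 := x1^2 + x2^2 in let yy := y1^2 + y2^2 in let D := a*d - b*c in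
  let p := x1*k1 + x2*k2 in let w := x1*k2 - x2*k1 in
  let zz0 := (z1 - p/rho2*y1)^2 + (z2 - p/rho2*y2)^2 in
  w^2*yy/(rho2^2*D) + zz0*yy/(rho2*D) + (s0r a b c d e f g h)^2/D^2.

Lemma core_id (a b c d e f g h : R) : 0 < a*d - b*c ->
  eta ((e,f),(g,h)) ((e,f),(g,h)) / det ((a,b),(c,d)) + (eta ((a,b),(c,d)) ((e,f),(g,h)))^2 / (det ((a,b),(c,d)))^2
  + 2 * (eta ((e,f),(g,h)) (Fx ((a,b),(c,d))))^2 / (r2 ((a,b),(c,d)) * det ((a,b),(c,d)))
  = 2 * Sq ((a,b),(c,d)) ((e,f),(g,h)) + Er a b c d e f g h.
Proof.
  intros HD. pose proof (r2_det ((a,b),(c,d))) as Hr.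
  unfold Er, s0r, Sq, eta, Fx, Pd, dot, r2, det, ma, mb, mc, md in *; simpl in *.
  assert (0 < (a + d) * ((a + d) * 1) + (b - c) * ((b - c) * 1)) by lra.
  assert ((a+d)*(a+d)+(b-c)*(b-c) = (a + d) * ((a + d) * 1) + (b - c) * ((b - c) * 1)) by ring.
  field. split; lra.
Qed.

Lemma Er_ge (a b c d e f g h : R) : 0 < a*d - b*c ->
  (s0r a b c d e f g h)^2/(a*d-b*c)^2 <= Er a b c d e f g h.
Proof.
  intros HD. pose proof (r2_det ((a,b),(c,d))) as Hr.
  unfold r2, det, ma, mb, mc, md in Hr; simpl in Hr.
  unfold Er. cbv zeta.
  set (rho2 := ((a + d) / 2) ^ 2 + ((b - c) / 2) ^ 2).
  assert (Hrho : 0 < rho2) by (unfold rho2; simpl; lra).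
  set (yy := ((a - d) / 2) ^ 2 + ((b + c) / 2) ^ 2).
  assert (Hyy : 0 <= yy) by (unfold yy; pose proof (pow2_ge_0 ((a - d) / 2)); pose proof (pow2_ge_0 ((b + c) / 2)); lra).
  set (w := (a + d) / 2 * ((f - g) / 2) - (b - c) / 2 * ((e + h) / 2)).
  set (p := (a + d) / 2 * ((e + h) / 2) + (b - c) / 2 * ((f - g) / 2)).
  set (zz0 := ((e - h) / 2 - p / rho2 * ((a - d) / 2)) ^ 2 + ((f + g) / 2 - p / rho2 * ((b + c) / 2)) ^ 2).
  assert (Hzz : 0 <= zz0) by (unfold zz0; pose proof (pow2_ge_0 ((e - h) / 2 - p / rho2 * ((a - d) / 2))); pose proof (pow2_ge_0 ((f + g) / 2 - p / rho2 * ((b + c) / 2))); lra).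
  assert (0 <= w^2*yy/(rho2^2*(a*d-b*c))).
  { apply Rmult_le_pos. apply Rmult_le_pos; auto. apply pow2_ge_0.
    left; apply Rinv_0_lt_compat. apply Rmult_lt_0_compat; auto. apply pow_lt; auto. }
  assert (0 <= zz0*yy/(rho2*(a*d-b*c))).
  { apply Rmult_le_pos. apply Rmult_le_pos; auto.
    left; apply Rinv_0_lt_compat. apply Rmult_lt_0_compat; auto. }
  lra.
Qed.

Lemma lnq_id (a b c d e f g h : R) : 0 < a*d - b*c ->
  Ddet ((a,b),(c,d)) ((e,f),(g,h)) / det ((a,b),(c,d)) - 2 * Pd ((a,b),(c,d)) ((e,f),(g,h)) / r2 ((a,b),(c,d))
  = -2 * s0r a b c d e f g h / (a*d - b*c).
Proof.
  intros HD. pose proof (r2_det ((a,b),(c,d))) as Hr.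
  unfold s0r, Ddet, Pd, r2, det, ma, mb, mc, md in *; simpl in *.
  assert (0 < (a + d) * ((a + d) * 1) + (b - c) * ((b - c) * 1)) by lra.
  assert ((a+d)*(a+d)+(b-c)*(b-c) = (a + d) * ((a + d) * 1) + (b - c) * ((b - c) * 1)) by ring.
  field. split; lra.
Qed.

Definition ErA (A v : M2) : R := Er (ma A) (mb A) (mc A) (md A) (ma v) (mb v) (mc v) (md v).
Definition s0A (A v : M2) : R := s0r (ma A) (mb A) (mc A) (md A) (ma v) (mb v) (mc v) (md v).

Lemma gWick_Sq A v : 0 < det A -> gWick Fx A v v = 2 * Sq A v + ErA A v.
Proof.
  intros H. rewrite gWick_simpl; auto.
  destruct A as [[a b] [c d]], v as [[e f] [g h]].
  apply core_id. exact H.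
Qed.

Lemma ErA_ge A v : 0 < det A -> (s0A A v)^2 / (det A)^2 <= ErA A v.
Proof. intros H. destruct A as [[a b] [c d]], v as [[e f] [g h]]. apply Er_ge. exact H. Qed.

Lemma lnq_idA A v : 0 < det A -> Ddet A v / det A - 2 * Pd A v / r2 A = -2 * s0A A v / det A.
Proof. intros H. destruct A as [[a b] [c d]], v as [[e f] [g h]]. apply lnq_id. exact H. Qed.

Definition DN (k : M2 -> R) (A v : M2) : R :=
  k v / sqrt (r2 A) - k A * Pd A v / (sqrt (r2 A) * sqrt (r2 A) * sqrt (r2 A)).

Lemma Sq_sum A v : 0 < det A -> Sq A v = (DN ma A v)^2 + (DN mb A v)^2 + (DN mc A v)^2 + (DN md A v)^2.
Proof.
  intros H. assert (Hr : 0 < r2 A) by (pose proof (r2_det A); lra).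
  unfold DN, Sq, dot. set (R := sqrt (r2 A)).
  assert (HR : r2 A = R * R) by (unfold R; rewrite sqrt_sqrt; lra).
  assert (R <> 0) by (unfold R; apply Rgt_not_eq, sqrt_lt_R0; lra).
  rewrite HR. field. auto.
Qed.

Lemma abs_le_sqrt x G : x^2 <= G -> Rabs x <= sqrt G.
Proof.
  intros H. rewrite <- sqrt_Rsqr_abs. apply sqrt_le_1_alt. unfold Rsqr. simpl in H. lra.
Qed.

Lemma Sq_ge0 A v : 0 < det A -> 0 <= Sq A v.
Proof.
  intros H; rewrite Sq_sum; auto.
  pose proof (pow2_ge_0 (DN ma A v)); pose proof (pow2_ge_0 (DN mb A v));
  pose proof (pow2_ge_0 (DN mc A v)); pose proof (pow2_ge_0 (DN md A v)); lra.
Qed.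

Lemma ErA_ge0 A v : 0 < det A -> 0 <= ErA A v.
Proof.
  intros H. pose proof (ErA_ge A v H). assert (0 <= (s0A A v)^2 / (det A)^2).
  { apply Rmult_le_pos. apply pow2_ge_0. left; apply Rinv_0_lt_compat, pow_lt; auto. }
  lra.
Qed.

Lemma DN_bound k A v : 0 < det A -> (k = ma \/ k = mb \/ k = mc \/ k = md) ->
  Rabs (DN k A v) <= sqrt (gWick Fx A v v).
Proof.
  intros H Hk. apply abs_le_sqrt. rewrite gWick_Sq; auto. rewrite Sq_sum; auto.
  pose proof (ErA_ge0 A v H).
  pose proof (pow2_ge_0 (DN ma A v)); pose proof (pow2_ge_0 (DN mb A v));
  pose proof (pow2_ge_0 (DN mc A v)); pose proof (pow2_ge_0 (DN md A v)).
  destruct Hk as [E|[E|[E|E]]]; subst k; lra.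
Qed.

Lemma lnq_bound A v : 0 < det A ->
  Rabs (Ddet A v / det A - 2 * Pd A v / r2 A) <= 2 * sqrt (gWick Fx A v v).
Proof.
  intros H. rewrite lnq_idA; auto.
  replace (2 * sqrt (gWick Fx A v v)) with (sqrt (4 * gWick Fx A v v)).
  2:{ rewrite sqrt_mult_alt by lra. replace 4 with (2*2) by ring. rewrite sqrt_square; lra. }
  apply abs_le_sqrt. rewrite gWick_Sq; auto.
  pose proof (Sq_ge0 A v H). pose proof (ErA_ge A v H).
  replace ((-2 * s0A A v / det A)^2) with (4 * ((s0A A v)^2 / (det A)^2)) by (field; lra).
  lra.
Qed.


Lemma is_derive_fst {V W : NormedModule R_AbsRing} (f : R -> V * W) t l :
  is_derive f t l -> is_derive (fun s => fst (f s)) t (fst l).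
Proof.
  intros H. unfold is_derive in *.
  apply (filterdiff_comp' f fst t _ fst H).
  apply filterdiff_linear. apply is_linear_fst.
Qed.
Lemma is_derive_snd {V W : NormedModule R_AbsRing} (f : R -> V * W) t l :
  is_derive f t l -> is_derive (fun s => snd (f s)) t (snd l).
Proof.
  intros H. unfold is_derive in *.
  apply (filterdiff_comp' f snd t _ snd H).
  apply filterdiff_linear. apply is_linear_snd.
Qed.

Section Curve.
Variables (c dc : R -> M2) (t : R).
Hypothesis Hd : is_derive c t (dc t).
Lemma der_ma : is_derive (fun s => ma (c s)) t (ma (dc t)).
Proof. unfold ma. apply (is_derive_fst (fun s => fst (c s))). apply (is_derive_fst c). exact Hd. Qed.
Lemma der_mb : is_derive (fun s => mb (c s)) t (mb (dc t)).
Proof. unfold mb. apply (is_derive_snd (fun s => fst (c s))). apply (is_derive_fst c). exact Hd. Qed.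
Lemma der_mc : is_derive (fun s => mc (c s)) t (mc (dc t)).
Proof. unfold mc. apply (is_derive_fst (fun s => snd (c s))). apply (is_derive_snd c). exact Hd. Qed.
Lemma der_md : is_derive (fun s => md (c s)) t (md (dc t)).
Proof. unfold md. apply (is_derive_snd (fun s => snd (c s))). apply (is_derive_snd c). exact Hd. Qed.
Lemma cont_c : continuous c t.
Proof.
  apply (ex_derive_continuous (K:=R_AbsRing) (V:=prod_NormedModule R_AbsRing (prod_NormedModule R_AbsRing R_NormedModule R_NormedModule) (prod_NormedModule R_AbsRing R_NormedModule R_NormedModule)) c t).
  exists (dc t). exact Hd.
Qed.
End Curve.

Definition etar (a b c d e f g h : R) : R := - (/ 2) * (a * h + d * e - b * g - c * f).
Definition gAr (a b c d e f g h e' f' g' h' : R) : R :=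
  ((a*d - b*c) * etar e f g h e' f' g' h' + etar a b c d e f g h * etar a b c d e' f' g' h') / ((a*d-b*c)^2).
Definition GW (a b c d e f g h : R) : R :=
  gAr a b c d e f g h e f g h - 2 * gAr a b c d e f g h (b-c) (-(a+d)) (a+d) (b-c)
   * gAr a b c d e f g h (b-c) (-(a+d)) (a+d) (b-c)
   / gAr a b c d (b-c) (-(a+d)) (a+d) (b-c) (b-c) (-(a+d)) (a+d) (b-c).

Lemma gWick_GW A v : gWick Fx A v v = GW (ma A) (mb A) (mc A) (md A) (ma v) (mb v) (mc v) (md v).
Proof. destruct A as [[a b] [c d]], v as [[e f] [g h]]. reflexivity. Qed.

Lemma gAr_FF_ne A : 0 < det A ->
  gAr (ma A) (mb A) (mc A) (md A) (mb A - mc A) (-(ma A + md A)) (ma A + md A) (mb A - mc A)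
      (mb A - mc A) (-(ma A + md A)) (ma A + md A) (mb A - mc A) <> 0.
Proof.
  intros H. assert (Hr : 0 < r2 A) by (pose proof (r2_det A); lra).
  destruct A as [[a b] [c d]]. unfold r2, det, ma, mb, mc, md in *; simpl in *.
  replace (gAr a b c d (b - c) (- (a + d)) (a + d) (b - c) (b - c) (- (a + d)) (a + d) (b - c))
    with (- (((a + d) ^ 2 + (b - c) ^ 2) / (a * d - b * c))) by (unfold gAr, etar; field; lra).
  assert (0 < ((a + d) ^ 2 + (b - c) ^ 2) / (a * d - b * c)) by (apply Rdiv_lt_0_compat; lra).
  lra.
Qed.

Section Adm.
Variables (c dc : R -> M2).
Hypothesis Hadm : admissible_curve c dc.

Lemma h_cont t : 0 <= t <= 1 -> continuous (fun s => sqrt (gWick Fx (c s) (dc s) (dc s))) t.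
Proof.
  intros Ht. destruct Hadm as [Hpos [Hder Hdc]].
  pose proof (cont_c c dc t (Hder t Ht)) as Hc.
  pose proof (Hpos t Ht) as Hp.
  apply (continuous_ext (fun s => sqrt (GW (ma (c s)) (mb (c s)) (mc (c s)) (md (c s)) (ma (dc s)) (mb (dc s)) (mc (dc s)) (md (dc s))))).
  { intros s; rewrite gWick_GW; reflexivity. }
  unfold GW, gAr, etar. cont; try assumption; try apply Hc; try apply (Hdc t Ht).
  all: try (apply pow_nonzero; unfold det in Hp; lra).
  all: try (apply (gAr_FF_ne (c t) Hp)).
  all: lra.
Qed.
End Adm.

Lemma LB_gen (c dc : R -> M2) (g g' : R -> R) (K : R) :
  admissible_curve c dc -> 0 <= K ->
  (forall t, 0 <= t <= 1 -> is_derive g t (g' t)) ->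
  (forall t, 0 <= t <= 1 -> continuous g' t) ->
  (forall t, 0 <= t <= 1 -> Rabs (g' t) <= K * sqrt (gWick Fx (c t) (dc t) (dc t))) ->
  Rabs (g 1 - g 0) <= K * wick_length Fx c dc.
Proof.
  intros Hadm HK Hg Hgc Hb.
  assert (Hm : Rmin 0 1 = 0) by (apply Rmin_left; lra).
  assert (HM : Rmax 0 1 = 1) by (apply Rmax_right; lra).
  assert (HI : is_RInt g' 0 1 (minus (g 1) (g 0))).
  { apply (is_RInt_derive (V:=R_CompleteNormedModule)); rewrite Hm, HM; auto. }
  apply (is_RInt_unique (V:=R_CompleteNormedModule)) in HI.
  replace (g 1 - g 0) with (RInt g' 0 1) by (rewrite HI; reflexivity).
  assert (Hh : ex_RInt (fun s => sqrt (gWick Fx (c s) (dc s) (dc s))) 0 1).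
  { apply (ex_RInt_continuous (V:=R_CompleteNormedModule)). rewrite Hm, HM. intros z Hz. apply h_cont; auto. }
  eapply Rle_trans. apply abs_RInt_le. lra. exists (minus (g 1) (g 0)). apply (is_RInt_derive (V:=R_CompleteNormedModule)); rewrite Hm, HM; auto.
  unfold wick_length.
  replace (K * RInt (fun t : R => sqrt (gWick Fx (c t) (dc t) (dc t))) 0 1)
    with (RInt (fun t => scal K (sqrt (gWick Fx (c t) (dc t) (dc t)))) 0 1)
    by (exact (RInt_scal (V:=R_CompleteNormedModule) _ 0 1 K Hh)).
  apply RInt_le. lra.
  - apply (ex_RInt_continuous (V:=R_CompleteNormedModule)). rewrite Hm, HM. intros z Hz. apply cabs. auto.
  - apply (ex_RInt_scal (V:=R_CompleteNormedModule) _ 0 1 K) in Hh. exact Hh.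
  - intros x Hx. apply Hb. lra.
Qed.

Lemma der_N_real (kk a b c d : R -> R) t dk da db dc dd :
  is_derive kk t dk -> is_derive a t da -> is_derive b t db -> is_derive c t dc -> is_derive d t dd ->
  0 < (a t + d t)^2 + (b t - c t)^2 ->
  is_derive (fun s => kk s / sqrt ((a s + d s)^2 + (b s - c s)^2)) t
   (dk / sqrt ((a t + d t)^2 + (b t - c t)^2) - kk t * ((a t + d t)*(da + dd) + (b t - c t)*(db - dc))
      / (sqrt ((a t + d t)^2 + (b t - c t)^2) * sqrt ((a t + d t)^2 + (b t - c t)^2) * sqrt ((a t + d t)^2 + (b t - c t)^2))).
Proof.
  intros Hk Ha Hb Hc Hd Hr.
  assert (HX : (a t + d t) * ((a t + d t) * 1) + (b t + - c t) * ((b t + - c t) * 1) = (a t + d t)^2 + (b t - c t)^2) by ring.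
  assert (0 < sqrt ((a t + d t)^2 + (b t - c t)^2)) by (apply sqrt_lt_R0; auto).
  auto_derive.
  - repeat split; try (eexists; eassumption); auto; rewrite HX; lra.
  - rewrite HX.
    rewrite (is_derive_unique (fun x : R => a x) t _ Ha), (is_derive_unique (fun x : R => b x) t _ Hb), (is_derive_unique (fun x : R => c x) t _ Hc),
      (is_derive_unique (fun x : R => d x) t _ Hd), (is_derive_unique (fun x : R => kk x) t _ Hk).
    field. lra.
Qed.

Lemma der_N (c dc : R -> M2) (k : M2 -> R) t :
  is_derive c t (dc t) -> 0 < det (c t) -> is_derive (fun s => k (c s)) t (k (dc t)) ->
  is_derive (fun s => k (c s) / sqrt (r2 (c s))) t (DN k (c t) (dc t)).
Proof.
  intros Hd Hp Hk. assert (Hr : 0 < r2 (c t)) by (pose proof (r2_det (c t)); lra).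
  pose proof (der_ma c dc t Hd) as Ha. pose proof (der_mb c dc t Hd) as Hb.
  pose proof (der_mc c dc t Hd) as Hc. pose proof (der_md c dc t Hd) as Hdd.
  unfold DN, Pd, r2 in *.
  apply (der_N_real (fun s => k (c s)) (fun s => ma (c s)) (fun s => mb (c s)) (fun s => mc (c s)) (fun s => md (c s))); auto.
Qed.

Lemma der_lnq_real (a b c d : R -> R) t da db dc dd :
  is_derive a t da -> is_derive b t db -> is_derive c t dc -> is_derive d t dd ->
  0 < a t * d t - b t * c t -> 0 < (a t + d t)^2 + (b t - c t)^2 ->
  is_derive (fun s => ln (a s * d s - b s * c s) - ln ((a s + d s)^2 + (b s - c s)^2)) t
   ((a t * dd + d t * da - b t * dc - c t * db) / (a t * d t - b t * c t)
    - 2 * ((a t + d t)*(da + dd) + (b t - c t)*(db - dc)) / ((a t + d t)^2 + (b t - c t)^2)).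
Proof.
  intros Ha Hb Hc Hd Hp Hr.
  auto_derive.
  - repeat split; try (eexists; eassumption); auto.
  - rewrite (is_derive_unique (fun x : R => a x) t _ Ha), (is_derive_unique (fun x : R => b x) t _ Hb), (is_derive_unique (fun x : R => c x) t _ Hc),
      (is_derive_unique (fun x : R => d x) t _ Hd).
    field. split; lra.
Qed.

Definition lnq (A : M2) : R := ln (det A) - ln (r2 A).
Definition Dlnq (A v : M2) : R := Ddet A v / det A - 2 * Pd A v / r2 A.

Lemma der_lnq (c dc : R -> M2) t :
  is_derive c t (dc t) -> 0 < det (c t) ->
  is_derive (fun s => lnq (c s)) t (Dlnq (c t) (dc t)).
Proof.
  intros Hd Hp. assert (Hr : 0 < r2 (c t)) by (pose proof (r2_det (c t)); lra).
  pose proof (der_ma c dc t Hd) as Ha. pose proof (der_mb c dc t Hd) as Hb.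
  pose proof (der_mc c dc t Hd) as Hc. pose proof (der_md c dc t Hd) as Hdd.
  unfold lnq, Dlnq, Ddet, Pd, r2, det in *.
  apply (der_lnq_real (fun s => ma (c s)) (fun s => mb (c s)) (fun s => mc (c s)) (fun s => md (c s))); auto.
Qed.

Lemma cont_DN (c dc : R -> M2) (k : M2 -> R) t :
  continuous c t -> continuous dc t -> 0 < det (c t) ->
  continuous (fun s => k (c s)) t -> continuous (fun s => k (dc s)) t ->
  continuous (fun s => DN k (c s) (dc s)) t.
Proof.
  intros Hc Hdc Hp Hk1 Hk2. assert (Hr : 0 < r2 (c t)) by (pose proof (r2_det (c t)); lra).
  assert (0 < sqrt (r2 (c t))) by (apply sqrt_lt_R0; auto).
  unfold DN, Pd. unfold r2 in *. cont; try assumption; try lra.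
  all: try (apply Rmult_integral_contrapositive; split; try apply Rmult_integral_contrapositive; try split; lra).
Qed.

Lemma cont_Dlnq (c dc : R -> M2) t :
  continuous c t -> continuous dc t -> 0 < det (c t) ->
  continuous (fun s => Dlnq (c s) (dc s)) t.
Proof.
  intros Hc Hdc Hp. assert (Hr : 0 < r2 (c t)) by (pose proof (r2_det (c t)); lra).
  unfold Dlnq, Ddet, Pd. unfold r2, det in *. cont; try assumption; try lra.
Qed.


Definition Nk (k : M2 -> R) (A : M2) : R := k A / sqrt (r2 A).
Definition sg (l : R) : R := if Rlt_dec 0 l then 1 else -1.

Lemma sg_abs l : l <> 0 -> l = sg l * Rabs l.
Proof. intros H. unfold sg. destruct (Rlt_dec 0 l). rewrite Rabs_right; lra. rewrite Rabs_left; lra. Qed.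
Lemma sg_cases l : sg l = 1 \/ sg l = -1.
Proof. unfold sg. destruct (Rlt_dec 0 l); auto. Qed.

Lemma r2_scal l A : r2 (scal l A) = l^2 * r2 A.
Proof. unfold r2. rewrite ma_scal, mb_scal, mc_scal, md_scal. ring. Qed.
Lemma det_scal l A : det (scal l A) = l^2 * det A.
Proof. unfold det. rewrite ma_scal, mb_scal, mc_scal, md_scal. ring. Qed.

Definition klin (k : M2 -> R) := k = ma \/ k = mb \/ k = mc \/ k = md.

Lemma klin_scal k l A : klin k -> k (scal l A) = l * k A.
Proof. intros [E|[E|[E|E]]]; subst k; reflexivity. Qed.

Lemma Nk_scal k l A : klin k -> l <> 0 -> 0 < det A -> Nk k (scal l A) = sg l * Nk k A.
Proof.
  intros Hk Hl HA. assert (Hr : 0 < r2 A) by (pose proof (r2_det A); lra).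
  unfold Nk. rewrite klin_scal, r2_scal; auto.
  rewrite sqrt_mult_alt by (apply pow2_ge_0).
  rewrite <- (Rsqr_pow2 l), sqrt_Rsqr_abs.
  assert (0 < sqrt (r2 A)) by (apply sqrt_lt_R0; auto).
  assert (0 < Rabs l) by (apply Rabs_pos_lt; auto).
  rewrite (sg_abs l Hl) at 1. field. lra.
Qed.

Lemma lnq_scal l A : l <> 0 -> 0 < det A -> lnq (scal l A) = lnq A.
Proof.
  intros Hl HA. assert (Hr : 0 < r2 A) by (pose proof (r2_det A); lra).
  assert (0 < l^2) by (apply pow2_gt_0; auto).
  unfold lnq. rewrite det_scal, r2_scal, !ln_mult; auto. ring.
Qed.

Lemma klin_der k (c dc : R -> M2) t : klin k -> is_derive c t (dc t) ->
  is_derive (fun s => k (c s)) t (k (dc t)).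
Proof.
  intros [E|[E|[E|E]]] H; subst k.
  apply der_ma; auto. apply der_mb; auto. apply der_mc; auto. apply der_md; auto.
Qed.
Lemma klin_cont k (c : R -> M2) t : klin k -> continuous c t -> continuous (fun s => k (c s)) t.
Proof. intros [E|[E|[E|E]]] H; subst k; cont; auto. Qed.

Lemma LB_N A B eps : 0 < det A -> 0 < det B -> wick_dist_lt Fx A B eps ->
  exists sigma, (sigma = 1 \/ sigma = -1) /\
   forall k, klin k -> Rabs (Nk k A - sigma * Nk k B) < eps.
Proof.
  intros HA HB [c [dc [Hadm [[l [Hl E0]] [[m [Hm E1]] HL]]]]].
  exists (sg l * sg m). split.
  { destruct (sg_cases l) as [-> | ->], (sg_cases m) as [-> | ->]; [left|right|right|left]; ring. }
  intros k Hk.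
  assert (H := LB_gen c dc (fun s => Nk k (c s)) (fun s => DN k (c s) (dc s)) 1 Hadm ltac:(lra)).
  destruct Hadm as [Hpos [Hder Hdc]].
  assert (Hle : Rabs (Nk k (c 1) - Nk k (c 0)) <= 1 * wick_length Fx c dc).
  { apply H.
    - intros t Ht. apply der_N; auto. apply klin_der; auto.
    - intros t Ht. apply cont_DN; auto. apply (cont_c c dc t (Hder t Ht)).
      apply klin_cont; auto. apply (cont_c c dc t (Hder t Ht)). apply klin_cont; auto.
    - intros t Ht. rewrite Rmult_1_l. apply DN_bound; auto. }
  rewrite E0, E1, !Nk_scal in Hle; auto.
  replace (Nk k A - sg l * sg m * Nk k B) with (- sg l * (sg m * Nk k B - sg l * Nk k A)).
  2:{ destruct (sg_cases l) as [-> | ->]; ring. }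
  rewrite Rabs_mult. replace (Rabs (- sg l)) with 1. lra.
  destruct (sg_cases l) as [-> | ->]; unfold Rabs; destruct Rcase_abs; lra.
Qed.

Lemma LB_q A B eps : 0 < det A -> 0 < det B -> wick_dist_lt Fx A B eps ->
  Rabs (lnq A - lnq B) < 2 * eps.
Proof.
  intros HA HB [c [dc [Hadm [[l [Hl E0]] [[m [Hm E1]] HL]]]]].
  assert (H := LB_gen c dc (fun s => lnq (c s)) (fun s => Dlnq (c s) (dc s)) 2 Hadm ltac:(lra)).
  destruct Hadm as [Hpos [Hder Hdc]].
  assert (Hle : Rabs (lnq (c 1) - lnq (c 0)) <= 2 * wick_length Fx c dc).
  { apply H.
    - intros t Ht. apply der_lnq; auto.
    - intros t Ht. apply cont_Dlnq; auto. apply (cont_c c dc t (Hder t Ht)).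
    - intros t Ht. apply lnq_bound; auto. }
  rewrite E0, E1, !lnq_scal in Hle; auto.
  rewrite Rabs_minus_sym. lra.
Qed.


Definition bdd (X : M2) (M : R) := forall k, klin k -> Rabs (k X) <= M.

Lemma bdd_all X M : bdd X M -> Rabs (ma X) <= M /\ Rabs (mb X) <= M /\ Rabs (mc X) <= M /\ Rabs (md X) <= M.
Proof. intros H; repeat split; apply H; unfold klin; auto 6. Qed.

Lemma prod_bd x y X Y : Rabs x <= X -> Rabs y <= Y -> Rabs (x*y) <= X*Y.
Proof. intros H1 H2. rewrite Rabs_mult. apply Rmult_le_compat; auto; apply Rabs_pos. Qed.

Lemma eta_bd X Y MX MY : bdd X MX -> bdd Y MY -> Rabs (eta X Y) <= 2 * MX * MY.
Proof.
  intros HX HY. apply bdd_all in HX as (h1&h2&h3&h4). apply bdd_all in HY as (g1&g2&g3&g4).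
  unfold eta.
  pose proof (prod_bd _ _ _ _ h1 g4). pose proof (prod_bd _ _ _ _ h4 g1).
  pose proof (prod_bd _ _ _ _ h2 g3). pose proof (prod_bd _ _ _ _ h3 g2).
  set (p1 := ma X * md Y) in *. set (p2 := md X * ma Y) in *. set (p3 := mb X * mc Y) in *. set (p4 := mc X * mb Y) in *.
  rewrite Rabs_mult. replace (Rabs (- / 2)) with (/2) by (rewrite Rabs_Ropp, Rabs_right; lra).
  assert (Rabs (p1 + p2 - p3 - p4) <= Rabs p1 + Rabs p2 + Rabs p3 + Rabs p4).
  { unfold Rminus. eapply Rle_trans. apply Rabs_triang. rewrite Rabs_Ropp.
    eapply Rle_trans. apply Rplus_le_compat_r. apply Rabs_triang. rewrite Rabs_Ropp.
    eapply Rle_trans. apply Rplus_le_compat_r. apply Rplus_le_compat_r. apply Rabs_triang. lra. }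
  lra.
Qed.

Lemma bdd_F A M : bdd A M -> bdd (Fx A) (2*M).
Proof.
  intros H. apply bdd_all in H as (h1&h2&h3&h4).
  intros k [E|[E|[E|E]]]; subst k; unfold Fx, ma, mb, mc, md in *; simpl.
  - unfold Rminus. eapply Rle_trans. apply Rabs_triang. rewrite Rabs_Ropp. lra.
  - rewrite Rabs_Ropp. eapply Rle_trans. apply Rabs_triang. lra.
  - eapply Rle_trans. apply Rabs_triang. lra.
  - unfold Rminus. eapply Rle_trans. apply Rabs_triang. rewrite Rabs_Ropp. lra.
Qed.

Lemma sq_bd x X : Rabs x <= X -> x^2 <= X^2.
Proof. intros H. rewrite <- (Rsqr_pow2 x), <- (Rsqr_pow2 X), Rsqr_abs. apply Rsqr_incr_1; auto; [apply Rabs_pos | pose proof (Rabs_pos x); lra]. Qed.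

Lemma gWick_bd A V m d : 0 < d <= 1 -> d <= det A -> bdd A 2 -> bdd V m -> 0 <= m ->
  gWick Fx A V V <= 50 * m^2 / d^2.
Proof.
  intros Hd HD HA HV Hm.
  assert (Hr : 4 * d <= r2 A) by (pose proof (r2_det A); lra).
  rewrite gWick_simpl by lra.
  pose proof (eta_bd _ _ _ _ HV HV) as E1.
  pose proof (eta_bd _ _ _ _ HA HV) as E2.
  pose proof (eta_bd _ _ _ _ HV (bdd_F _ _ HA)) as E3.
  apply sq_bd in E2. apply sq_bd in E3.
  assert (T1 : eta V V / det A <= 2 * m^2 / d^2).
  { apply Rle_trans with (Rabs (eta V V) / det A). unfold Rdiv. apply Rmult_le_compat_r.
    left; apply Rinv_0_lt_compat; lra. apply Rle_abs.
    apply Rle_trans with (2 * m * m / d).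
    unfold Rdiv. apply Rmult_le_compat; try lra. apply Rabs_pos. left; apply Rinv_0_lt_compat; lra.
    apply Rinv_le_contravar; lra.
    apply Rle_trans with (2 * m^2 / d * (1/d)).
    replace (2 * m * m / d) with (2 * m^2 / d * 1) by (field; lra).
    apply Rmult_le_compat_l. apply Rmult_le_pos. apply Rmult_le_pos; [lra|apply pow2_ge_0]. left; apply Rinv_0_lt_compat; lra.
    unfold Rdiv. rewrite Rmult_1_l. rewrite <- Rinv_1 at 1. apply Rinv_le_contravar; lra.
    right; field; lra. }
  assert (T2 : (eta A V)^2 / (det A)^2 <= 16 * m^2 / d^2).
  { unfold Rdiv. apply Rmult_le_compat. apply pow2_ge_0. left; apply Rinv_0_lt_compat, pow_lt; lra.
    replace (16 * m^2) with ((2*2*m)^2) by ring. auto.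
    apply Rinv_le_contravar. apply pow_lt; lra. apply pow_incr; lra. }
  assert (T3 : 2 * (eta V (Fx A))^2 / (r2 A * det A) <= 32 * m^2 / d^2).
  { unfold Rdiv. replace (32 * m^2 * / d^2) with (2 * (2*m*(2*2))^2 * / (4*d*d)) by (field; lra).
    apply Rmult_le_compat. apply Rmult_le_pos; [lra|apply pow2_ge_0].
    left; apply Rinv_0_lt_compat, Rmult_lt_0_compat; lra.
    apply Rmult_le_compat_l; lra.
    apply Rinv_le_contravar. apply Rmult_lt_0_compat; lra. apply Rmult_le_compat; lra. }
  assert (2 * m^2 / d^2 + 16 * m^2 / d^2 + 32 * m^2 / d^2 = 50 * m^2 / d^2) by (field; lra).
  lra.
Qed.

Lemma det_line P V t : det (plus P (scal t V)) = det P + t * (-2 * eta P V) + t^2 * (- eta V V).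
Proof. unfold det, eta. rewrite ma_plus, mb_plus, mc_plus, md_plus, ma_scal, mb_scal, mc_scal, md_scal. field. Qed.

Lemma klin_line k P V t : klin k -> k (plus P (scal t V)) = k P + t * k V.
Proof. intros [E|[E|[E|E]]]; subst k; reflexivity. Qed.

Lemma UB P Q d m eps : 0 < d <= 1 -> d <= det P -> bdd P 1 ->
  (forall k, klin k -> Rabs (k Q - k P) <= m) -> 0 <= m <= d / 12 -> 15 * m / d < eps ->
  wick_dist_lt Fx P Q eps.
Proof.
  intros Hd HP HbP HQ Hm Heps.
  set (V := ((ma Q - ma P, mb Q - mb P), (mc Q - mc P, md Q - md P)) : M2).
  assert (HV : bdd V m).
  { intros k [E|[E|[E|E]]]; subst k; unfold V; simpl; apply HQ; unfold klin; auto 6. }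
  assert (Hbc : forall t, 0 <= t <= 1 -> bdd (plus P (scal t V)) 2).
  { intros t Ht k Hk. rewrite klin_line by auto.
    eapply Rle_trans. apply Rabs_triang. rewrite Rabs_mult, (Rabs_right t) by lra.
    pose proof (HbP k Hk). pose proof (HV k Hk). pose proof (Rabs_pos (k V)). nra. }
  assert (Hdet : forall t, 0 <= t <= 1 -> d / 2 <= det (plus P (scal t V))).
  { intros t Ht. rewrite det_line.
    pose proof (eta_bd _ _ _ _ HbP HV) as E1. pose proof (eta_bd _ _ _ _ HV HV) as E2.
    apply Rabs_le_between in E1. apply Rabs_le_between in E2.
    assert (0 <= t^2 <= 1) by (simpl; nra).
    assert (m <= 1) by lra.
    nra. }
  assert (Hadm : admissible_curve (fun t => plus P (scal t V)) (fun _ => V)).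
  { split; [|split].
    - intros t Ht. pose proof (Hdet t Ht). lra.
    - intros t _. 
      assert (H := is_derive_plus (fun _ => P) (fun s => scal s V) t zero (scal one V)
                    (is_derive_const P t) (is_derive_scal_l (fun s => s) t one V (is_derive_id t))).
      rewrite plus_zero_l, scal_one in H. exact H.
    - intros t _. apply continuous_const. }
  exists (fun t => plus P (scal t V)), (fun _ => V). split; [exact Hadm|split; [|split]].
  - exists 1. split. lra. apply M2_eq; rewrite ?ma_plus, ?mb_plus, ?mc_plus, ?md_plus, ?ma_scal, ?mb_scal, ?mc_scal, ?md_scal; ring.
  - exists 1. split. lra. apply M2_eq; rewrite ?ma_plus, ?mb_plus, ?mc_plus, ?md_plus, ?ma_scal, ?mb_scal, ?mc_scal, ?md_scal;
      unfold V, ma, mb, mc, md; simpl; ring.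
  - unfold wick_length.
    assert (Hex : ex_RInt (fun t => sqrt (gWick Fx (plus P (scal t V)) V V)) 0 1).
    { apply (ex_RInt_continuous (V:=R_CompleteNormedModule)). 
      rewrite Rmin_left, Rmax_right by lra. intros z Hz.
      apply (h_cont _ _ Hadm z Hz). }
    eapply Rle_lt_trans. apply Rle_abs.
    eapply Rle_lt_trans. apply (abs_RInt_le_const _ 0 1 (15 * m / d)). lra. exact Hex.
    + intros t Ht. rewrite Rabs_right by apply Rle_ge, sqrt_pos.
      eapply Rle_trans. apply sqrt_le_1_alt. apply (gWick_bd _ _ m (d/2)); [lra | apply Hdet; auto | apply Hbc; auto | exact HV | lra].
      rewrite <- (sqrt_square (15 * m / d)).
      apply sqrt_le_1_alt.
      assert (0 <= m / d) by (apply Rmult_le_pos; [lra | left; apply Rinv_0_lt_compat; lra]).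
      replace (50 * m^2 / (d/2)^2) with (200 * (m / d) * (m / d)) by (field; lra).
      replace (15 * m / d * (15 * m / d)) with (225 * (m / d) * (m / d)) by (field; lra).
      nra.
      apply Rmult_le_pos. lra. left; apply Rinv_0_lt_compat; lra.
    + lra.
Qed.


Definition nrm (A : M2) : M2 := scal (/ sqrt (r2 A)) A.

Lemma nrm_k k A : klin k -> k (nrm A) = Nk k A.
Proof. intros Hk. unfold nrm, Nk. rewrite klin_scal by auto. unfold Rdiv. ring. Qed.

Lemma nrm_det A : 0 < det A -> det (nrm A) = exp (lnq A).
Proof.
  intros H. assert (Hr : 0 < r2 A) by (pose proof (r2_det A); lra).
  unfold nrm, lnq. rewrite det_scal. rewrite <- ln_div by auto. rewrite exp_ln.
  2:{ apply Rdiv_lt_0_compat; auto. }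
  rewrite <- Rinv_pow by (apply Rgt_not_eq, sqrt_lt_R0; auto).
  rewrite <- Rsqr_pow2, Rsqr_sqrt by lra. field. lra.
Qed.

Lemma nrm_r2 A : 0 < det A -> r2 (nrm A) = 1.
Proof.
  intros H. assert (Hr : 0 < r2 A) by (pose proof (r2_det A); lra).
  unfold nrm. rewrite r2_scal.
  rewrite <- Rinv_pow by (apply Rgt_not_eq, sqrt_lt_R0; auto).
  rewrite <- Rsqr_pow2, Rsqr_sqrt by lra. field. lra.
Qed.

Lemma abs_le_1 x : x^2 <= 1 -> Rabs x <= 1.
Proof.
  intros H. destruct (Rle_dec (Rabs x) 1) as [h|h]; auto. exfalso.
  assert (1 < Rabs x) by lra. rewrite <- (Rsqr_pow2 x), Rsqr_abs in H. unfold Rsqr in H.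
  assert (1 * 1 < Rabs x * Rabs x) by (apply Rmult_le_0_lt_compat; lra). lra.
Qed.

Lemma bdd_of_r2 X : 0 <= det X -> r2 X <= 1 -> bdd X 1.
Proof.
  intros H1 H2.
  assert (Hs : (ma X)^2 + (mb X)^2 + (mc X)^2 + (md X)^2 = r2 X - 2 * det X) by (unfold r2, det; ring).
  pose proof (pow2_ge_0 (ma X)); pose proof (pow2_ge_0 (mb X)); pose proof (pow2_ge_0 (mc X)); pose proof (pow2_ge_0 (md X)).
  intros k [E|[E|[E|E]]]; subst k; apply abs_le_1; lra.
Qed.

Definition Sd (X Y : M2) : R := Rabs (ma X - ma Y) + Rabs (mb X - mb Y) + Rabs (mc X - mc Y) + Rabs (md X - md Y).

Lemma r2_small_r a b c d : Rabs a + Rabs b + Rabs c + Rabs d < 1/4 -> (a+d)^2 + (b-c)^2 < 1.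
Proof.
  intros H.
  pose proof (Rabs_pos a); pose proof (Rabs_pos b); pose proof (Rabs_pos c); pose proof (Rabs_pos d).
  assert (h1 : Rabs (a + d) <= Rabs a + Rabs d) by apply Rabs_triang.
  assert (h2 : Rabs (b - c) <= Rabs b + Rabs c) by (unfold Rminus; rewrite <- (Rabs_Ropp c); apply Rabs_triang).
  apply sq_bd in h1. apply sq_bd in h2.
  set (p := Rabs a + Rabs d) in *. set (q := Rabs b + Rabs c) in *.
  assert (0 <= p * q) by (apply Rmult_le_pos; unfold p, q; lra).
  assert (E : (p+q)^2 = p^2 + q^2 + 2 * (p*q)) by ring.
  assert ((p+q)^2 <= (1/4)^2) by (apply pow_incr; unfold p, q in *; lra).
  lra.
Qed.

Lemma r2_small X : Rabs (ma X) + Rabs (mb X) + Rabs (mc X) + Rabs (md X) < 1/4 -> r2 X < 1.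
Proof. intros H. unfold r2. apply r2_small_r; auto. Qed.

Lemma Sd_k k X Y : klin k -> Rabs (k X - k Y) <= Sd X Y.
Proof.
  intros [E|[E|[E|E]]]; subst k; unfold Sd;
  pose proof (Rabs_pos (ma X - ma Y)); pose proof (Rabs_pos (mb X - mb Y));
  pose proof (Rabs_pos (mc X - mc Y)); pose proof (Rabs_pos (md X - md Y)); lra.
Qed.

Lemma abs_tri3 x y z : Rabs (x - z) <= Rabs (x - y) + Rabs (y - z).
Proof. replace (x - z) with ((x - y) + (y - z)) by ring. apply Rabs_triang. Qed.

Lemma Sd_tri X Y Z : Sd X Z <= Sd X Y + Sd Y Z.
Proof.
  unfold Sd.
  pose proof (abs_tri3 (ma X) (ma Y) (ma Z)); pose proof (abs_tri3 (mb X) (mb Y) (mb Z));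
  pose proof (abs_tri3 (mc X) (mc Y) (mc Z)); pose proof (abs_tri3 (md X) (md Y) (md Z)). lra.
Qed.

Lemma Sd_sym X Y : Sd X Y = Sd Y X.
Proof. unfold Sd. rewrite (Rabs_minus_sym (ma X)), (Rabs_minus_sym (mb X)), (Rabs_minus_sym (mc X)), (Rabs_minus_sym (md X)). ring. Qed.

Lemma abs_two x y : 2 * Rabs x <= Rabs (x - y) + Rabs (x - (-1) * y).
Proof.
  replace (2 * Rabs x) with (Rabs (2 * x)) by (rewrite Rabs_mult, (Rabs_right 2); lra).
  replace (2 * x) with ((x - y) + (x - (-1) * y)) by ring. apply Rabs_triang.
Qed.

Lemma sign_sq s : s = 1 \/ s = -1 -> s^2 = 1.
Proof. intros [-> | ->]; ring. Qed.

Lemma Sd_scal_both s X Y : s = 1 \/ s = -1 -> Sd (scal s X) (scal s Y) = Sd X Y.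
Proof.
  intros Hs. unfold Sd. rewrite !ma_scal, !mb_scal, !mc_scal, !md_scal.
  rewrite <- !Rmult_minus_distr_l, !Rabs_mult.
  replace (Rabs s) with 1 by (destruct Hs as [-> | ->]; unfold Rabs; destruct Rcase_abs; lra). ring.
Qed.

Lemma proj_eq_scal mu X Y : mu <> 0 -> proj_eq (scal mu X) Y -> proj_eq X Y.
Proof.
  intros Hmu [l [Hl E]]. exists (l * mu). split. apply Rmult_integral_contrapositive; auto.
  rewrite E, scal_assoc. reflexivity.
Qed.

Lemma wick_dist_scal mu X Y eps : mu <> 0 -> wick_dist_lt Fx (scal mu X) Y eps -> wick_dist_lt Fx X Y eps.
Proof.
  intros Hmu [c [dc [H1 [H2 [H3 H4]]]]]. exists c, dc. split; [exact H1 | split; [| split; auto]].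
  apply (proj_eq_scal mu X (c 0)); auto.
Qed.

Lemma scal1 (X : M2) : scal 1 X = X.
Proof. apply M2_eq; rewrite ?ma_scal, ?mb_scal, ?mc_scal, ?md_scal; ring. Qed.

Lemma Fx_complete : wick_complete Fx.
Proof.
  intros u Hpos HC.
  destruct (HC 1 Rlt_0_1) as [N0 HN0].
  set (q0 := exp (lnq (u N0) - 2)).
  assert (Hq0 : 0 < q0) by apply exp_pos.
  assert (Hq : forall n, (N0 <= n)%nat -> q0 <= det (nrm (u n))).
  { intros n Hn. rewrite nrm_det by auto. apply Rlt_le, exp_increasing.
    pose proof (LB_q _ _ _ (Hpos N0) (Hpos n) (HN0 N0 n (le_n _) Hn)) as H.
    apply Rabs_def2 in H. lra. }
  set (d := Rmin q0 1).
  assert (Hd : 0 < d <= 1) by (unfold d; split; [apply Rmin_glb_lt; lra | apply Rmin_r]).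
  assert (Hdq : d <= q0) by apply Rmin_l.
  assert (HS : forall e, 0 < e -> exists N, forall m n, (N <= m)%nat -> (N <= n)%nat ->
            exists sigma, (sigma = 1 \/ sigma = -1) /\ Sd (nrm (u m)) (scal sigma (nrm (u n))) < e).
  { intros e He. destruct (HC (e/4) ltac:(lra)) as [N HN]. exists N. intros m n Hm Hn.
    destruct (LB_N _ _ _ (Hpos m) (Hpos n) (HN m n Hm Hn)) as [sigma [Hs Hk]].
    exists sigma. split; auto. unfold Sd. rewrite ma_scal, mb_scal, mc_scal, md_scal.
    rewrite !nrm_k by (unfold klin; auto 6).
    pose proof (Hk ma ltac:(unfold klin; auto 6)). pose proof (Hk mb ltac:(unfold klin; auto 6)).
    pose proof (Hk mc ltac:(unfold klin; auto 6)). pose proof (Hk md ltac:(unfold klin; auto 6)).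
    lra. }
  destruct (HS (1/32) ltac:(lra)) as [K0 HK0].
  set (s := fun n => if Rlt_dec (Sd (nrm (u K0)) (nrm (u n))) (1/8) then 1 else -1).
  assert (Hs : forall n, s n = 1 \/ s n = -1) by (intros n; unfold s; destruct Rlt_dec; auto).
  set (v := fun n => scal (s n) (nrm (u n))).
  assert (Hv1 : forall n, (K0 <= n)%nat -> Sd (nrm (u K0)) (v n) < 1/8).
  { intros n Hn. destruct (HK0 K0 n (le_n _) Hn) as [sigma [Hsig Hlt]].
    unfold v, s. destruct Rlt_dec as [h|h].
    - rewrite (scal1 (nrm (u n))). exact h.
    - destruct Hsig as [-> | ->].
      + rewrite (scal1 (nrm (u n))) in Hlt. lra.
      + lra. }
  assert (Hvdet : forall n, (N0 <= n)%nat -> d <= det (v n)).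
  { intros n Hn. unfold v. rewrite det_scal, sign_sq by auto. pose proof (Hq n Hn). lra. }
  assert (Hvr2 : forall n, r2 (v n) = 1).
  { intros n. unfold v. rewrite r2_scal, sign_sq, nrm_r2 by auto. ring. }
  assert (Hvbdd : forall n, (N0 <= n)%nat -> bdd (v n) 1).
  { intros n Hn. apply bdd_of_r2. pose proof (Hvdet n Hn); lra. rewrite Hvr2; lra. }
  assert (HvC : forall e, 0 < e -> exists N, forall m n, (N <= m)%nat -> (N <= n)%nat -> Sd (v m) (v n) < e).
  { intros e He. destruct (HS (Rmin e (1/32)) ltac:(apply Rmin_glb_lt; lra)) as [N1 HN1].
    exists (Nat.max N1 K0). intros m n Hm Hn.
    destruct (HN1 m n ltac:(lia) ltac:(lia)) as [sigma [Hsig Hlt]].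
    pose proof (Rmin_l e (1/32)). pose proof (Rmin_r e (1/32)).
    assert (Hlt' : Sd (v m) (scal (sigma * s m * s n) (v n)) < Rmin e (1/32)).
    { unfold v. rewrite scal_assoc.
      replace (mult (sigma * s m * s n) (s n)) with (mult (s m) sigma).
      2:{ unfold mult; simpl. destruct (Hs n) as [-> | ->]; ring. }
      rewrite <- scal_assoc, Sd_scal_both; auto. }
    assert (Hsig' : sigma * s m * s n = 1 \/ sigma * s m * s n = -1).
    { destruct Hsig as [-> | ->], (Hs m) as [-> | ->], (Hs n) as [-> | ->];
      [left|right|right|left|right|left|left|right]; ring. }
    destruct Hsig' as [E|E]; rewrite E in Hlt'.
    - rewrite (scal1 (v n)) in Hlt'. lra.
    - exfalso.
      assert (Hmn : Sd (v m) (v n) < 1/4).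
      { pose proof (Sd_tri (v m) (nrm (u K0)) (v n)) as Ht. rewrite (Sd_sym (v m) (nrm (u K0))) in Ht.
        pose proof (Hv1 m ltac:(lia)). pose proof (Hv1 n ltac:(lia)). lra. }
      assert (Hsm : Rabs (ma (v m)) + Rabs (mb (v m)) + Rabs (mc (v m)) + Rabs (md (v m)) < 1/4).
      { unfold Sd in Hmn, Hlt'. rewrite ma_scal, mb_scal, mc_scal, md_scal in Hlt'.
        pose proof (abs_two (ma (v m)) (ma (v n))); pose proof (abs_two (mb (v m)) (mb (v n)));
        pose proof (abs_two (mc (v m)) (mc (v n))); pose proof (abs_two (md (v m)) (md (v n))).
        lra. }
      apply r2_small in Hsm. rewrite Hvr2 in Hsm. lra. }
  assert (Hcc : forall k, klin k -> Cauchy_crit (fun n => k (v n))).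
  { intros k Hk e He. destruct (HvC e He) as [N HN]. exists N. intros n m Hn Hm.
    unfold Rdist. eapply Rle_lt_trans. apply Sd_k; auto. apply HN; lia. }
  destruct (Rcomplete.R_complete _ (Hcc ma ltac:(unfold klin; auto 6))) as [la Ha].
  destruct (Rcomplete.R_complete _ (Hcc mb ltac:(unfold klin; auto 6))) as [lb Hb].
  destruct (Rcomplete.R_complete _ (Hcc mc ltac:(unfold klin; auto 6))) as [lc Hc].
  destruct (Rcomplete.R_complete _ (Hcc md ltac:(unfold klin; auto 6))) as [ld Hdd].
  set (B := ((la, lb), (lc, ld)) : M2).
  assert (Hconv : forall eps, 0 < eps -> exists N, forall n, (N <= n)%nat -> wick_dist_lt Fx (u n) B eps).
  { intros eps Heps.
    set (mm := Rmin (d/12) (d * eps / 30)).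
    assert (Hmm : 0 < mm) by (unfold mm; apply Rmin_glb_lt; [lra | apply Rdiv_lt_0_compat; [apply Rmult_lt_0_compat|]; lra]).
    destruct (Ha mm Hmm) as [Na HNa]. destruct (Hb mm Hmm) as [Nb HNb].
    destruct (Hc mm Hmm) as [Nc HNc]. destruct (Hdd mm Hmm) as [Nd HNd].
    exists (Nat.max (Nat.max (Nat.max Na Nb) (Nat.max Nc Nd)) N0). intros n Hn.
    apply (wick_dist_scal (s n * / sqrt (r2 (u n)))).
    { assert (0 < sqrt (r2 (u n))) by (apply sqrt_lt_R0; pose proof (r2_det (u n)); pose proof (Hpos n); lra).
      apply Rmult_integral_contrapositive. split. destruct (Hs n) as [-> | ->]; lra.
      apply Rinv_neq_0_compat; lra. }
    replace (scal (s n * / sqrt (r2 (u n))) (u n)) with (v n) by (unfold v, nrm; rewrite scal_assoc; reflexivity).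
    apply (UB (v n) B d mm eps Hd).
    - apply Hvdet; lia.
    - apply Hvbdd; lia.
    - intros k [E|[E|[E|E]]]; subst k; unfold B, ma, mb, mc, md; simpl; rewrite Rabs_minus_sym; left.
      + apply (HNa n); lia.
      + apply (HNb n); lia.
      + apply (HNc n); lia.
      + apply (HNd n); lia.
    - split. lra. apply Rmin_l.
    - assert (mm <= d * eps / 30) by apply Rmin_r.
      apply Rmult_le_compat_r with (r := / d) in H; [|left; apply Rinv_0_lt_compat; lra].
      unfold Rdiv in *. replace (15 * mm * / d) with (15 * (mm * / d)) by ring.
      replace (d * eps * / 30 * / d) with (eps / 30) in H by (field; lra). lra. }
  exists B. split.
  - destruct (Hconv 1 Rlt_0_1) as [N HN]. destruct (HN N (le_n _)) as [c [dc [[Hp _] [_ [[l [Hl E]] _]]]]].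
    pose proof (Hp 1 ltac:(lra)) as H1. rewrite E, det_scal in H1.
    assert (0 < l^2) by (apply pow2_gt_0; auto).
    destruct (Rlt_or_le 0 (det B)) as [h|h]; auto.
    assert (l^2 * det B <= 0) by (apply Rmult_le_0_l; lra). lra.
  - exact Hconv.
Qed.

Theorem mainTheorem15 :
  exists X : M2 -> M2, timelike_field_on_closure X /\ wick_complete X.
Proof. exists Fx. split. apply Fx_timelike. apply Fx_complete. Qed.
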